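(* Let $\mathcal{X}\subset\mathbb{R}^n$ be compact and consider the control-affine system $\bm{x}_{t+1}=\bm{f}(\bm{x}_t)+\bm{g}(\bm{x}_t)\bm{u}_t$ with $\bm{f}\colon\mathcal{X}\to\mathcal{X}$, $\bm{g}\colon\mathcal{X}\to\mathbb{R}^{n\times m}$. Suppose a data set of $N$ trajectories $\tau_n=\{\bm{x}_t^n\}_{t=0}^T$, $n=1,\dots,N$, is generated by an agent applying a stabilizing deterministic policy $\bm{\pi}$ (i.e. $\bm{x}_{t+1}^n=\bm{f}(\bm{x}_t^n)+\bm{g}(\bm{x}_t^n)\bm{\pi}(\bm{x}_t^n)$, zero perturbation covariance). Fix $\beta>0$. If $\bm{f}(\bm{x})\neq\bm{f}(\bm{x}')$ for all $\bm{x},\bm{x}'\in\mathcal{X}$ with $\bm{x}\neq\bm{x}'$, then there exists a (differentiable) function $V$ such that the closed-loop control law $$\hat{\bm{\pi}}(\bm{x})=-\beta\left[\nabla V(\bm{f}(\bm{x}))\,\bm{g}(\bm{x})\right]^\intercal$$ generates the training data, i.e. $\bm{x}_{t+1}^n=\bm{f}(\bm{x}_t^n)+\bm{g}(\bm{x}_t^n)\hat{\bm{\pi}}(\bm{x}_t^n)$ for all $t=0,\dots,T-1$ and $n=1,\dots,N$.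
   Context: $\nabla V$ denotes the gradient of $V$ as a row vector. *)

(* Defs.v *)
From HB Require Import structures.
From mathcomp Require Import all_boot all_order all_algebra.
From mathcomp Require Import all_classical all_reals all_analysis.
Set Implicit Arguments. Unset Strict Implicit. Unset Printing Implicit Defensive.
Import Order.TTheory GRing.Theory Num.Theory.
Import numFieldNormedType.Exports.
Local Open Scope classical_set_scope.
Local Open Scope ring_scope.

Definition grad (R : realType) (n : nat) (V : 'cV[R]_n -> R) (y : 'cV[R]_n)
  : 'rV[R]_n := \row_i ('D_(delta_mx i 0) V y).

Definition closed_loop (R : realType) (n m : nat)
  (f : 'cV[R]_n -> 'cV[R]_n) (g : 'cV[R]_n -> 'M[R]_(n, m))
  (pi : 'cV[R]_n -> 'cV[R]_m) (x : 'cV[R]_n) : 'cV[R]_n :=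
  f x + g x *m pi x.

Definition stabilizing (R : realType) (n m : nat) (X : set 'cV[R]_n)
  (f : 'cV[R]_n -> 'cV[R]_n) (g : 'cV[R]_n -> 'M[R]_(n, m))
  (pi : 'cV[R]_n -> 'cV[R]_m) : Prop :=
  exists xe : 'cV[R]_n,
    forall x0, X x0 ->
      (fun k : nat => iter k (closed_loop f g pi) x0) @ \oo --> xe.

Definition pihat (R : realType) (n m : nat) (beta : R)
  (V : 'cV[R]_n -> R) (f : 'cV[R]_n -> 'cV[R]_n)
  (g : 'cV[R]_n -> 'M[R]_(n, m)) (x : 'cV[R]_n) : 'cV[R]_m :=
  - beta *: (grad V (f x) *m g x)^T.

(* Main.v *)
Require Import Defs.
From HB Require Import structures.
From mathcomp Require Import all_boot all_order all_algebra.
From mathcomp Require Import all_classical all_reals all_analysis.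
Import Order.TTheory GRing.Theory Num.Theory.
Import numFieldNormedType.Exports.
Local Open Scope classical_set_scope.
Local Open Scope ring_scope.
Set Implicit Arguments. Unset Strict Implicit. Unset Printing Implicit Defensive.
Lemma sumsq_row0 (R : realFieldType) n (u : 'rV[R]_n) : u *m u^T = 0 -> u = 0.
Proof.
move=> /matrixP /(_ 0 0); rewrite !mxE => H.
have: forall i, true -> u 0 i * u^T i 0 = 0.
  apply/psumr_eq0P; last by rewrite H.
  by move=> i _; rewrite mxE -expr2 sqr_ge0.
move=> Hi; apply/rowP => i; rewrite mxE.
by have := Hi i isT; rewrite mxE -expr2 => /eqP; rewrite sqrf_eq0 => /eqP.
Qed.

Lemma range_lemma (R : realFieldType) n m (G : 'M[R]_(n, m)) (p : 'cV[R]_m) :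
  exists r : 'rV[R]_n, r *m (G *m G^T) = (G *m p)^T.
Proof.
have K0 : (G :&: kermx G^T)%MS = 0.
  apply/row_matrixP => i; rewrite row0.
  have := row_sub i (G :&: kermx G^T)%MS; rewrite sub_capmx => /andP[].
  move=> /submxP[a ->] /sub_kermxP H.
  by apply: sumsq_row0; rewrite trmx_mul mulmxA H mul0mx.
have Hr : \rank (G *m G^T) = \rank G^T.
  have := mxrank_mul_ker G G^T; rewrite K0 mxrank0 addn0 mxrank_tr => ->//.
have S : (G *m G^T <= G^T)%MS by apply: submxMl.
have E : (G *m G^T == G^T)%MS.
  by have := mxrank_leqif_eq S; rewrite Hr => /leqif_refl.
have : ((G *m p)^T <= G *m G^T)%MS.
  rewrite trmx_mul; apply: submx_trans (submxMl _ _) _.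
  by case/andP: E.
by case/submxP => r ->; exists r.
Qed.

Lemma w_exists (R : realFieldType) n m (G : 'M[R]_(n, m)) (p : 'cV[R]_m) (beta : R) :
  beta != 0 -> exists w : 'rV[R]_n, G *m (- beta *: (w *m G)^T) = G *m p.
Proof.
move=> b0; have [r hr] := range_lemma G p; exists (- beta^-1 *: r).
have := congr1 trmx hr; rewrite trmx_mul trmx_mul !trmxK => <-.
rewrite -scalemxAl !linearZ /= trmx_mul scalerA mulmxA.
by rewrite mulrNN mulfV // scale1r.
Qed.
Section An.
Variables (R : realType) (n : nat).
Notation V := 'cV[R]_n.
Implicit Types (f g : V -> R) (a v : V).

Lemma D_coord i j a v : 'D_v (fun y : V => y i j) a = v i j.
Proof.
have := derive_mx (M := id) (@derivable_id _ _ a v).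
by rewrite derive_id => /matrixP/(_ i j); rewrite mxE.
Qed.

Lemma D_M f g a v : differentiable f a -> differentiable g a ->
  'D_v (fun y => f y * g y) a = f a * 'D_v g a + g a * 'D_v f a.
Proof.
move=> df dg; have := deriveM (diff_derivable df) (diff_derivable dg).
by move=> ->.
Qed.

Lemma dM f g a : differentiable f a -> differentiable g a ->
  differentiable (fun y => f y * g y) a.
Proof. exact: differentiableM. Qed.

Lemma D_sum (I : eqType) (s : seq I) (F : I -> V -> R) :
  (forall i y, differentiable (F i) y) -> forall y,
  differentiable (fun z => \sum_(i <- s) F i z) y /\
  forall v, 'D_v (fun z => \sum_(i <- s) F i z) y = \sum_(i <- s) 'D_v (F i) y.
Proof.
move=> dF y; elim: s => [|a s [IH1 IH2]].
  have -> : (fun z => \sum_(i <- [::]) F i z) = cst 0.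
    by apply/funext => z; rewrite big_nil.
  by split; [exact: differentiable_cst | move=> v; rewrite derive_cst big_nil].
have -> : (fun z => \sum_(i <- a :: s) F i z) =
   F a + (fun z => \sum_(i <- s) F i z).
  by apply/funext => z; rewrite big_cons.
split; first exact: differentiableD.
move=> v; rewrite deriveD ?big_cons ?IH2 //; exact: diff_derivable.
Qed.

Lemma d_prod (I : eqType) (s : seq I) (P : pred I) (F : I -> V -> R) :
  (forall i y, differentiable (F i) y) -> forall y,
  differentiable (fun z => \prod_(i <- s | P i) F i z) y.
Proof.
move=> dF y; elim: s => [|a s IH].
  have -> : (fun z => \prod_(i <- [::] | P i) F i z) = cst 1.
    by apply/funext => z; rewrite big_nil.
  exact: differentiable_cst.
have -> : (fun z => \prod_(i <- a :: s | P i) F i z) =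
   (fun z => (if P a then F a z else 1) * \prod_(i <- s | P i) F i z).
  by apply/funext => z; rewrite big_cons; case: (P a); rewrite ?mul1r.
apply: dM => //; case: (P a) => //; exact: differentiable_cst.
Qed.

Definition flat f a := f a = 0 /\ forall v, 'D_v f a = 0.

Lemma flatM f g a : differentiable f a -> differentiable g a -> flat f a ->
  flat (fun y => f y * g y) a.
Proof.
move=> df dg [f0 Df]; split; first by rewrite f0 mul0r.
by move=> v; rewrite D_M // f0 Df mul0r mulr0 addr0.
Qed.

Lemma flat_prod (I : eqType) (s : seq I) (P : pred I) (F : I -> V -> R) a j :
  (forall i y, differentiable (F i) y) -> j \in s -> P j -> flat (F j) a ->
  flat (fun z => \prod_(i <- s | P i) F i z) a.
Proof.
move=> dF; elim: s => [//|b s IH]; rewrite inE => /orP[/eqP <-|js] Pj fj.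
  have -> : (fun z => \prod_(i <- j :: s | P i) F i z) =
     (fun z => F j z * \prod_(i <- s | P i) F i z).
    by apply/funext => z; rewrite big_cons Pj.
  by apply: flatM => //; apply: d_prod.
have -> : (fun z => \prod_(i <- b :: s | P i) F i z) =
   (fun z => \prod_(i <- s | P i) F i z * (if P b then F b z else 1)).
  by apply/funext => z; rewrite big_cons mulrC; case: (P b); rewrite ?mul1r ?mulr1.
apply: flatM; [exact: d_prod| |exact: IH].
case: (P b) => //; exact: differentiable_cst.
Qed.


Definition sq (c : V) (y : V) : R := \sum_(i < n) (y i 0 - c i 0) * (y i 0 - c i 0).
Definition ell (w : 'rV[R]_n) (c : V) (y : V) : R := \sum_(i < n) w 0 i * (y i 0 - c i 0).

Lemma d_aff i (c : V) y : differentiable (fun z : V => z i 0 - c i 0) y.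
Proof. apply: differentiableB; [exact: differentiable_coord | exact: differentiable_cst]. Qed.

Lemma D_aff i (c : V) y v : 'D_v (fun z : V => z i 0 - c i 0) y = v i 0.
Proof.
rewrite (deriveB (f := fun z : V => z i 0) (g := cst (c i 0))).
- by rewrite D_coord derive_cst subr0.
- exact/diff_derivable/differentiable_coord.
- exact: derivable_cst.
Qed.

Lemma d_sq c y : differentiable (sq c) y.
Proof.
have [d _] := D_sum (index_enum 'I_n)
  (F := fun i (z : V) => (z i 0 - c i 0) * (z i 0 - c i 0))
  (fun i y => dM (d_aff i c y) (d_aff i c y)) y.
exact: d.
Qed.

Lemma flat_sq c : flat (sq c) c.
Proof.
have [_ D] := D_sum (index_enum 'I_n)
  (F := fun i (z : V) => (z i 0 - c i 0) * (z i 0 - c i 0))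
  (fun i y => dM (d_aff i c y) (d_aff i c y)) c.
split.
  by rewrite /sq big1 // => i _; rewrite subrr mul0r.
move=> v; rewrite /sq D big1 // => i _.
by rewrite D_M ?subrr ?mul0r ?add0r //; exact: d_aff.
Qed.

Lemma sq_eq0 c y : sq c y = 0 -> y = c.
Proof.
move=> H; have Hi := psumr_eq0P _ H.
apply/matrixP => i j; rewrite (ord1 j).
have := Hi (fun i _ => ltac:(rewrite -expr2; exact: sqr_ge0)) i isT.
rewrite -expr2 => /eqP.
by rewrite sqrf_eq0 subr_eq0 => /eqP.
Qed.

Lemma d_ell w c y : differentiable (ell w c) y.
Proof.
have [d _] := D_sum (index_enum 'I_n)
  (F := fun i (z : V) => w 0 i * (z i 0 - c i 0))
  (fun i y => dM (differentiable_cst (w 0 i) y) (d_aff i c y)) y.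
exact: d.
Qed.

Lemma ell0 w c : ell w c c = 0.
Proof. by rewrite /ell big1 // => i _; rewrite subrr mulr0. Qed.

Lemma D_ell w c y v : 'D_v (ell w c) y = (w *m v) 0 0.
Proof.
have [_ D] := D_sum (index_enum 'I_n)
  (F := fun i (z : V) => w 0 i * (z i 0 - c i 0))
  (fun i y => dM (differentiable_cst (w 0 i) y) (d_aff i c y)) y.
rewrite /ell D mxE; apply: eq_bigr => i _.
rewrite (D_M (f := cst (w 0 i))) ?D_aff ?derive_cst ?mulr0 ?addr0 //.
all: first [exact: d_aff | exact: differentiable_cst | idtac].
Qed.

End An.


Theorem theorem1 (R : realType) (n m : nat) (X : set 'cV[R]_n)
  (f : 'cV[R]_n -> 'cV[R]_n) (g : 'cV[R]_n -> 'M[R]_(n, m))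
  (pi : 'cV[R]_n -> 'cV[R]_m) (N T : nat) (xs : 'I_N -> nat -> 'cV[R]_n)
  (beta : R) :
  compact X ->
  (forall x, X x -> X (f x)) ->
  stabilizing X f g pi ->
  (forall k t, (t <= T)%N -> X (xs k t)) ->
  (forall k t, (t < T)%N -> xs k t.+1 = f (xs k t) + g (xs k t) *m pi (xs k t)) ->
  0 < beta ->
  (forall x x', X x -> X x' -> x <> x' -> f x <> f x') ->
  exists V : 'cV[R]_n -> R,
    (forall y, differentiable V y) /\
    (forall k t, (t < T)%N ->
       xs k t.+1 = f (xs k t) + g (xs k t) *m pihat beta V f g (xs k t)).
Proof.
move=> _ _ _ HX Hstep bpos Hinj.
have b0 : beta != 0 by rewrite gt_eqF.
have [w Hw] := choice (fun x => w_exists (g x) (pi x) b0).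
pose L := undup [seq xs k t | k <- enum 'I_N, t <- iota 0 T].
have inL : forall k t, (t < T)%N -> xs k t \in L.
  move=> k t tT; rewrite mem_undup; apply: allpairs_f; first by rewrite mem_enum.
  by rewrite mem_iota add0n.
have LX : forall x, x \in L -> X x.
  move=> x; rewrite mem_undup => /allpairsP[[k t] [/= _ + ->]].
  by rewrite mem_iota add0n => /andP[_ tT]; apply: HX; apply: ltnW.
have uL : uniq L := undup_uniq _.
pose Pr x y := \prod_(x' <- L | x' != x) sq (f x') y.
pose Tm x y := Pr x y * ((Pr x (f x))^-1 * ell (w x) (f x) y).
have dPr : forall x y, differentiable (Pr x) y.
  move=> x y; exact: (d_prod L (fun xx => xx != x) (F := fun x' => sq (f x')) (fun i y => d_sq (f i) y)).
have dIn : forall x y, differentiable (fun z => (Pr x (f x))^-1 * ell (w x) (f x) z) y.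
  move=> x y; apply: dM; [exact: differentiable_cst | exact: d_ell].
have dT : forall x y, differentiable (Tm x) y.
  by move=> x y; apply: dM.
exists (fun y => \sum_(x <- L) Tm x y).
split; first by move=> y; have [d _] := D_sum L dT y.
have grad_eq : forall x0, x0 \in L -> grad (fun y => \sum_(x <- L) Tm x y) (f x0) = w x0.
  move=> x0 x0L; apply/rowP => i; rewrite mxE.
  have [_ D] := D_sum L dT (f x0); rewrite D (bigD1_seq x0) //= big1 ?addr0; last first.
    move=> x xx0.
    have fl : flat (Tm x) (f x0).
      apply: flatM => //.
      apply: (flat_prod (P := fun x' => x' != x) (F := fun x' => sq (f x')) (fun i y => d_sq (f i) y) x0L).
        by rewrite eq_sym.
      exact: flat_sq.
    by case: fl.
  have Pnz : Pr x0 (f x0) != 0.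
    rewrite prodf_seq_neq0; apply/allP => x' x'L; apply/implyP => x'x0.
    apply/eqP => /sq_eq0 E.
    apply: (Hinj x0 x' (LX _ x0L) (LX _ x'L)) => //.
    by move=> E'; move: x'x0; rewrite E' eqxx.
  rewrite /Tm D_M // ell0 mulr0 mul0r addr0.
  rewrite (D_M (f := cst (Pr x0 (f x0))^-1)) ?derive_cst ?mulr0 ?addr0; last 2 first.
    exact: differentiable_cst.
    exact: d_ell.
  by rewrite D_ell /= mulVKf // -colE mxE.
move=> k t tT; rewrite Hstep //; congr (_ + _).
by rewrite /pihat grad_eq ?inL // Hw.
Qed.
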